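(* Let $0=t_0<t_1<t_2<\dots<t_m$ be real numbers and let $p_1,\dots,p_m\ge 0$ with $\sum_{j=1}^m p_j=1$. For $j\in[m]$ let $q_j=\sum_{k=j}^m p_k$, and let $\|T\|_2=\sqrt{\sum_{j=1}^m p_jt_j^2}$. Then $$\sum_{j=1}^m (t_j-t_{j-1})\sqrt{q_j}\ \le\ t_1+\|T\|_2\sqrt{\ln(t_m/t_1)}.$$
   Context: Interpretation: $t_j$ are the possible stopping times of an algorithm, $p_j$ the probability of stopping at time $t_j$, $q_j$ the probability of stopping at time $\ge t_j$, and $\|T\|_2$ the $\ell_2$-averaged stopping time. *)

(* Defs.v *)
From Stdlib Require Import Reals Arith.
Open Scope R_scope.

Fixpoint sum1 (m : nat) (f : nat -> R) : R :=
  match m with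
  | O => 0
  | S k => sum1 k f + f (S k)
  end.

Definition qtail (m : nat) (p : nat -> R) (j : nat) : R :=
  sum1 m (fun k => if Nat.leb j k then p k else 0).

Definition l2norm (m : nat) (p t : nat -> R) : R :=
  sqrt (sum1 m (fun j => p j * t j ^ 2)).

(* Main.v *)
Require Import Defs.
From Stdlib Require Import Reals Arith Lra Lia Psatz.
Open Scope R_scope.

Lemma sum1_ext n f g : (forall j, (1 <= j)%nat -> (j <= n)%nat -> f j = g j) ->
  sum1 n f = sum1 n g.
Proof. induction n; simpl; intros H; auto. rewrite IHn by (intros; apply H; lia).
  rewrite H by lia; auto. Qed.

Lemma sum1_le n f g : (forall j, (1 <= j)%nat -> (j <= n)%nat -> f j <= g j) ->
  sum1 n f <= sum1 n g.
Proof. induction n; simpl; intros H; [lra|].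
  assert (sum1 n f <= sum1 n g) by (apply IHn; intros; apply H; lia).
  assert (f (S n) <= g (S n)) by (apply H; lia). lra. Qed.

Lemma sum1_plus n f g : sum1 n (fun j => f j + g j) = sum1 n f + sum1 n g.
Proof. induction n; simpl; [lra|]. rewrite IHn; lra. Qed.

Lemma sum1_scal n c f : sum1 n (fun j => c * f j) = c * sum1 n f.
Proof. induction n; simpl; [lra|]. rewrite IHn; lra. Qed.

Lemma sum1_nonneg n f : (forall j, (1 <= j)%nat -> (j <= n)%nat -> 0 <= f j) -> 0 <= sum1 n f.
Proof. intros H. replace 0 with (sum1 n (fun _ => 0)).
  apply sum1_le; auto. clear; induction n; simpl; auto; lra. Qed.

Lemma key X Y a b : 0 <= X -> 0 <= Y -> 0 <= a -> 0 <= b ->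
  sqrt X * sqrt Y + sqrt a * sqrt b <= sqrt (X + a) * sqrt (Y + b).
Proof. intros.
  rewrite <- (sqrt_mult (X + a)) by lra.
  pose proof (sqrt_sqrt X H). pose proof (sqrt_sqrt Y H0).
  pose proof (sqrt_sqrt a H1). pose proof (sqrt_sqrt b H2).
  pose proof (sqrt_pos X). pose proof (sqrt_pos Y).
  pose proof (sqrt_pos a). pose proof (sqrt_pos b).
  set (u := sqrt X) in *. set (v := sqrt Y) in *. set (c := sqrt a) in *. set (d := sqrt b) in *.
  rewrite <- (sqrt_square (u*v + c*d)) by nra.
  apply sqrt_le_1_alt. rewrite <- H3, <- H4, <- H5, <- H6.
  pose proof (pow2_ge_0 (u*d - c*v)). nra. Qed.

Lemma cs n x y : (forall j, (1 <= j)%nat -> (j <= n)%nat -> 0 <= x j /\ 0 <= y j) ->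
  sum1 n (fun j => sqrt (x j) * sqrt (y j)) <= sqrt (sum1 n x) * sqrt (sum1 n y).
Proof. induction n; simpl; intros H.
  - rewrite sqrt_0; lra.
  - assert (A := IHn (fun j a b => H j a ltac:(lia))).
    destruct (H (S n)) as [H1 H2]; try lia.
    assert (0 <= sum1 n x) by (apply sum1_nonneg; intros; apply H; lia).
    assert (0 <= sum1 n y) by (apply sum1_nonneg; intros; apply H; lia).
    pose proof (key (sum1 n x) (sum1 n y) (x (S n)) (y (S n)) H0 H3 H1 H2). lra. Qed.

Lemma exch n m d p :
  sum1 n (fun j => d j * sum1 m (fun k => if Nat.leb j k then p k else 0)) =
  sum1 m (fun k => p k * sum1 n (fun j => if Nat.leb j k then d j else 0)).
Proof. induction n; simpl.
  - clear. induction m; simpl; auto. rewrite <- IHm; ring.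
  - rewrite IHn. rewrite <- sum1_scal.
    rewrite <- sum1_plus. apply sum1_ext. intros.
    destruct (match j with 0%nat => false | S m' => Nat.leb n m' end); ring. Qed.

Lemma tele n k (t : nat -> R) :
  sum1 n (fun j => if Nat.leb j k then t j ^ 2 - t (pred j) ^ 2 else 0) =
  t (Nat.min n k) ^ 2 - t O ^ 2.
Proof. induction n; cbn [sum1]; [simpl; ring|]. rewrite IHn.
  destruct (Nat.leb_spec (S n) k).
  - replace (Nat.min n k) with n by lia. replace (Nat.min (S n) k) with (S n) by lia.
    simpl pred. ring.
  - replace (Nat.min n k) with k by lia. replace (Nat.min (S n) k) with k by lia. ring. Qed.

Lemma lnineq a b : 0 < a -> a < b -> (b - a) / b <= ln (b / a).
Proof. intros.
  unfold Rdiv. rewrite ln_mult, ln_Rinv by (try apply Rinv_0_lt_compat; lra).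
  pose proof (exp_ineq1_le (ln a + - ln b)).
  rewrite exp_plus, <- ln_Rinv, !exp_ln in H1 by (try apply Rinv_0_lt_compat; lra).
  replace ((b - a) * / b) with (1 - a / b) by (field; lra).
  rewrite ln_Rinv in H1 by lra. unfold Rdiv in *. lra. Qed.

Lemma split1 n F : (1 <= n)%nat ->
  sum1 n F = F 1%nat + sum1 n (fun j => if Nat.eqb j 1 then 0 else F j).
Proof. induction n; intros; [lia|]. destruct n.
  - simpl; ring.
  - change (sum1 (S (S n)) F) with (sum1 (S n) F + F (S (S n))). rewrite (IHn ltac:(lia)). cbn [sum1 Nat.eqb]. ring. Qed.

Theorem mainTheorem8 (m : nat) (t p : nat -> R)
  (hm : (1 <= m)%nat)
  (ht0 : t 0%nat = 0)
  (hinc : forall j : nat, (j < m)%nat -> t j < t (S j))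
  (hp : forall j : nat, (1 <= j)%nat -> (j <= m)%nat -> 0 <= p j)
  (hsum : sum1 m p = 1) :
  sum1 m (fun j => (t j - t (pred j)) * sqrt (qtail m p j))
    <= t 1%nat + l2norm m p t * sqrt (ln (t m / t 1%nat)).
Proof.
  assert (tpos : forall j, (1 <= j)%nat -> (j <= m)%nat -> 0 < t j).
  { induction j; intros; [lia|]. destruct j.
    - rewrite <- ht0; apply hinc; lia.
    - pose proof (IHj ltac:(lia) ltac:(lia)). pose proof (hinc (S j) ltac:(lia)). lra. }
  assert (qpos : forall j, 0 <= qtail m p j).
  { intros; unfold qtail; apply sum1_nonneg; intros. destruct (Nat.leb j j0); auto; lra. }
  assert (q1 : qtail m p 1 = 1).
  { rewrite <- hsum. unfold qtail. apply sum1_ext. intros. destruct j; [lia|]. reflexivity. }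
  set (x := fun j => if Nat.eqb j 1 then 0 else (t j - t (pred j)) / t j).
  set (y := fun j => if Nat.eqb j 1 then 0 else (t j - t (pred j)) * t j * qtail m p j).
  rewrite split1 by auto. simpl pred. rewrite q1, sqrt_1, ht0.
  replace ((t 1%nat - 0) * 1) with (t 1%nat) by ring. apply Rplus_le_compat_l.
  assert (xy : forall j, (1 <= j)%nat -> (j <= m)%nat -> 0 <= x j /\ 0 <= y j).
  { intros. unfold x, y. destruct (Nat.eqb_spec j 1); [lra|].
    destruct j; [lia|]. simpl pred. pose proof (hinc j ltac:(lia)). pose proof (tpos (S j) ltac:(lia) ltac:(lia)).
    pose proof (qpos (S j)). split.
    - apply Rmult_le_pos; [lra|]. left; apply Rinv_0_lt_compat; lra.
    - apply Rmult_le_pos; [|lra]. nra. }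
  apply Rle_trans with (sum1 m (fun j => sqrt (x j) * sqrt (y j))).
  { apply sum1_le. intros. unfold x, y. destruct (Nat.eqb_spec j 1).
    - rewrite sqrt_0; lra.
    - destruct j; [lia|]. simpl pred. pose proof (hinc j ltac:(lia)). pose proof (tpos (S j) ltac:(lia) ltac:(lia)).
      pose proof (qpos (S j)).
      rewrite <- sqrt_mult. 2: { apply Rmult_le_pos; [lra|]. left; apply Rinv_0_lt_compat; lra. }
      2: { apply Rmult_le_pos; [|lra]. nra. }
      replace ((t (S j) - t j) / t (S j) * ((t (S j) - t j) * t (S j) * qtail m p (S j)))
        with (((t (S j) - t j) * (t (S j) - t j)) * qtail m p (S j)) by (field; apply Rgt_not_eq; lra).
      rewrite sqrt_mult, sqrt_square; nra. }
  eapply Rle_trans. apply cs. exact xy.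
  rewrite Rmult_comm. unfold l2norm.
  assert (0 <= sum1 m x) by (apply sum1_nonneg; intros; apply xy; auto).
  assert (0 <= sum1 m y) by (apply sum1_nonneg; intros; apply xy; auto).
  apply Rmult_le_compat; try apply sqrt_pos; apply sqrt_le_1_alt.
  - apply Rle_trans with (sum1 m (fun j => (t j ^ 2 - t (pred j) ^ 2) * qtail m p j)).
    + apply sum1_le. intros. unfold y. pose proof (qpos j). destruct (Nat.eqb_spec j 1).
      * subst. simpl. rewrite ht0. pose proof (tpos 1%nat ltac:(lia) ltac:(lia)). nra.
      * destruct j; [lia|]. simpl pred. pose proof (hinc j ltac:(lia)).
        pose proof (tpos j ltac:(lia) ltac:(lia)).
        assert (0 <= (t (S j) - t j) * t j * qtail m p (S j)) by (apply Rmult_le_pos; [nra|lra]).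
        nra.
    + unfold qtail. rewrite exch. right. apply sum1_ext. intros.
      rewrite tele. replace (Nat.min m j) with j by lia. rewrite ht0. ring.
  - assert (forall n, (1 <= n)%nat -> (n <= m)%nat -> sum1 n x <= ln (t n / t 1%nat)).
    { induction n; intros; [lia|]. destruct n.
      - simpl. unfold x. simpl. unfold Rdiv. rewrite Rinv_r, ln_1. lra.
        pose proof (tpos 1%nat ltac:(lia) ltac:(lia)). lra.
      - change (sum1 (S (S n)) x) with (sum1 (S n) x + x (S (S n))). pose proof (IHn ltac:(lia) ltac:(lia)).
        unfold x at 2. simpl Nat.eqb. simpl pred.
        pose proof (hinc (S n) ltac:(lia)). pose proof (tpos (S n) ltac:(lia) ltac:(lia)).
        pose proof (tpos 1%nat ltac:(lia) ltac:(lia)).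
        pose proof (lnineq _ _ H5 H4).
        replace (ln (t (S (S n)) / t 1%nat)) with (ln (t (S n) / t 1%nat) + ln (t (S (S n)) / t (S n))).
        lra. unfold Rdiv. rewrite !ln_mult, !ln_Rinv; try apply Rinv_0_lt_compat; try lra. }
    apply H1; auto.
Qed.
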